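(* In the static load balancing game described in the context, suppose all initial loads are zero, i.e., $s_j^0=0$ for all $j\in[m]$. Then $\mathrm{PoA}\le 3$.
   Context: Static load balancing game: there are $m$ servers $[m]$ with service rates $\mu_j>0$ and initial loads $s_j^0\ge0$, and $n$ players $[n]$; player $i$ holds a job of length $\lambda_i>0$. Player $i$'s action set is $A_i=\{a_i=(a_{i1},\dots,a_{im}):\sum_j a_{ij}=1,\ a_{ij}\ge0\}$. The cost of player $i$ is $$D_i(a)=\sum_{j=1}^m \lambda_i a_{ij}\left(\frac{\lambda_i a_{ij}}{2\mu_j}+\frac{s_j^0+\sum_{k\neq i}\lambda_k a_{kj}}{\mu_j}\right).$$ A pure Nash equilibrium (NE) is a profile $a$ with $D_i(a_i,a_{-i})\le D_i(a_i',a_{-i})$ for all $i$, $a_i'\in A_i$. The price of anarchy is $\mathrm{PoA}=\dfrac{\max_{a\in\mathrm{NE}}\sum_iD_i(a)}{\min_a\sum_iD_i(a)}$. *)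

(* Defs.v *)
From mathcomp Require Import all_boot all_order all_algebra.
Set Implicit Arguments. Unset Strict Implicit. Unset Printing Implicit Defensive.
Import Order.TTheory GRing.Theory Num.Theory.
Local Open Scope ring_scope.

Section LB.
Variables (R : realFieldType) (m n : nat).

(* A strategy profile: a i j = fraction of player i's job sent to server j. *)
Definition profile := 'I_n -> 'I_m -> R.

Definition in_action (ai : 'I_m -> R) : Prop :=
  (forall j, 0 <= ai j) /\ \sum_(j < m) ai j = 1.

Definition feasible (a : profile) : Prop := forall i, in_action (a i).

Definition cost (mu s0 : 'I_m -> R) (lam : 'I_n -> R) (a : profile) (i : 'I_n) : R :=
  \sum_(j < m) lam i * a i j *
     (lam i * a i j / (2 * mu j)
      + (s0 j + \sum_(k < n | k != i) lam k * a k j) / mu j).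

Definition deviate (a : profile) (i : 'I_n) (ai : 'I_m -> R) : profile :=
  fun k => if k == i then ai else a k.

Definition is_NE (mu s0 : 'I_m -> R) (lam : 'I_n -> R) (a : profile) : Prop :=
  feasible a /\
  forall i (ai : 'I_m -> R), in_action ai ->
    cost mu s0 lam a i <= cost mu s0 lam (deviate a i ai) i.

Definition social_cost (mu s0 : 'I_m -> R) (lam : 'I_n -> R) (a : profile) : R :=
  \sum_(i < n) cost mu s0 lam a i.

End LB.

(* Main.v *)
Require Import Defs.
From mathcomp Require Import all_boot all_order all_algebra.
From mathcomp Require Import ring lra.
Import Order.TTheory GRing.Theory Num.Theory.
Local Open Scope ring_scope.
Set Implicit Arguments. Unset Strict Implicit.

Section Aux.
Variables (R : realFieldType) (m n : nat).
Variables (mu s0 : 'I_m -> R) (lam : 'I_n -> R).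
Hypothesis hmu : forall j, 0 < mu j.
Hypothesis hlam : forall i, 0 < lam i.
Hypothesis hs0 : forall j, s0 j = 0.

Definition Ld (a : 'I_n -> 'I_m -> R) j := \sum_(k < n) lam k * a k j.

Lemma Ld_split a i j : Ld a j = lam i * a i j + \sum_(k < n | k != i) lam k * a k j.
Proof. by rewrite /Ld (bigD1 i). Qed.

Lemma cost_eq a i : cost mu s0 lam a i =
  \sum_(j < m) (lam i * a i j) * ((lam i * a i j) / (2 * mu j) + (Ld a j - lam i * a i j) / mu j).
Proof.
apply: eq_bigr => j _; rewrite hs0 add0r (Ld_split a i j).
by congr (_ * (_ + _ / _)); rewrite (addrC (lam i * a i j)) addrK.
Qed.

Lemma cost_dev a i ci : cost mu s0 lam (deviate a i ci) i =
  \sum_(j < m) (lam i * ci j) * ((lam i * ci j) / (2 * mu j) + (Ld a j - lam i * a i j) / mu j).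
Proof.
apply: eq_bigr => j _; rewrite hs0 add0r (Ld_split a i j) /deviate eqxx.
congr (_ * (_ + _ / _)); rewrite (addrC (lam i * a i j)) addrK.
by apply: eq_bigr => k /negbTE ->.
Qed.

Lemma quad_pos (A B : R) : 0 <= B ->
  (forall e, 0 < e -> e <= 1 -> 0 <= e * A + e ^+ 2 * B) -> 0 <= A.
Proof.
move=> hB h; rewrite leNgt; apply/negP => hA.
have [hle|hlt] := lerP (B + 1) (- A).
  have := h 1 ltr01 (lexx _); lra.
set e := - A / (B + 1).
have hB1 : 0 < B + 1 by lra.
have he : e * (B + 1) = - A by rewrite /e; field; lra.
have e0 : 0 < e by rewrite /e divr_gt0 //; lra.
have e1 : e <= 1 by rewrite /e ler_pdivrMr //; lra.
have := h e e0 e1.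
have -> : e * A + e ^+ 2 * B = - e ^+ 2.
  have -> : A = - (e * (B + 1)) by rewrite he opprK.
  ring.
have : 0 < e ^+ 2 by rewrite exprn_gt0.
lra.
Qed.

Lemma player_ineq a b i : is_NE mu s0 lam a -> in_action (b i) ->
  0 <= \sum_(j < m) lam i * (b i j - a i j) * Ld a j / mu j.
Proof.
move=> [fa hNE] [bpos bsum]; have [apos asum] := fa i.
pose B := \sum_(j < m) (lam i * (b i j - a i j)) ^+ 2 / (2 * mu j).
apply: (@quad_pos _ B).
  apply: sumr_ge0 => j _; apply: divr_ge0; first exact: sqr_ge0.
  by apply: mulr_ge0 => //; apply: ltW.
move=> e e0 e1.
pose ci := fun j => a i j + e * (b i j - a i j).
have hci : in_action ci.
  split.
    move=> j; rewrite /ci.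
    have -> : a i j + e * (b i j - a i j) = (1 - e) * a i j + e * b i j by ring.
    apply: addr_ge0; apply: mulr_ge0 => //; try lra; exact: ltW.
  rewrite /ci big_split /= -mulr_sumr sumrB asum bsum; ring.
have := hNE i ci hci.
rewrite cost_eq cost_dev -subr_ge0 -sumrB.
suff -> : \sum_(j < m)
   (lam i * ci j * (lam i * ci j / (2 * mu j) + (Ld a j - lam i * a i j) / mu j) -
    lam i * a i j * (lam i * a i j / (2 * mu j) + (Ld a j - lam i * a i j) / mu j)) =
  e * \sum_(j < m) lam i * (b i j - a i j) * Ld a j / mu j + e ^+ 2 * B by [].
rewrite /B !mulr_sumr -big_split /=; apply: eq_bigr => j _.
rewrite /ci; have := hmu j; move=> hm; field; lra.
Qed.

End Aux.

Theorem corollary1 (R : realFieldType) (m n : nat)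
    (mu s0 : 'I_m -> R) (lam : 'I_n -> R)
    (hmu : forall j, 0 < mu j) (hlam : forall i, 0 < lam i)
    (hs0 : forall j, s0 j = 0)
    (a b : 'I_n -> 'I_m -> R) :
  is_NE mu s0 lam a -> feasible b ->
  social_cost mu s0 lam a <= 3 * social_cost mu s0 lam b.
Proof.
move=> hNE fb.
have fa := hNE.1.
set L := Ld lam a; set M := Ld lam b.
(* first-order condition *)
have H1 : 0 <= \sum_(j < m) (M j - L j) * L j / mu j.
  have : 0 <= \sum_(i < n) \sum_(j < m) lam i * (b i j - a i j) * Ld lam a j / mu j.
    by apply: sumr_ge0 => i _; apply: player_ineq.
  rewrite exchange_big /=.
  suff -> : \sum_(j < m) \sum_(i < n) lam i * (b i j - a i j) * Ld lam a j / mu j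
          = \sum_(j < m) (M j - L j) * L j / mu j by [].
  apply: eq_bigr => j _.
  under eq_bigr => i _ do rewrite -mulrA.
  rewrite -mulr_suml -[in RHS]mulrA; congr (_ * _).
  rewrite /M /L /Ld -sumrB; apply: eq_bigr => i _; ring.
have H2 : social_cost mu s0 lam a <= \sum_(j < m) L j * L j / mu j.
  rewrite /social_cost.
  apply: (@le_trans _ _ (\sum_(i < n) \sum_(j < m) lam i * a i j * L j / mu j)).
    apply: ler_sum => i _; rewrite cost_eq //; apply: ler_sum => j _.
    have hm := hmu j.
    set x := lam i * a i j.
    have -> : x * (x / (2 * mu j) + (Ld lam a j - x) / mu j)
            = x * L j / mu j - x ^+ 2 / (2 * mu j) by rewrite /L; field; lra.
    rewrite lerBlDr lerDl; apply: divr_ge0; first exact: sqr_ge0.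
    lra.
  rewrite exchange_big /=; rewrite le_eqVlt; apply/orP; left; apply/eqP.
  apply: eq_bigr => j _.
  under eq_bigr => i _ do rewrite -mulrA.
  by rewrite -mulr_suml -[in RHS]mulrA.
have H3 : \sum_(j < m) M j * M j / (2 * mu j) <= social_cost mu s0 lam b.
  rewrite /social_cost.
  apply: (@le_trans _ _ (\sum_(i < n) \sum_(j < m) lam i * b i j * M j / (2 * mu j))).
    rewrite exchange_big /= le_eqVlt; apply/orP; left; apply/eqP.
    apply: eq_bigr => j _.
    under [in RHS]eq_bigr => i _ do rewrite -mulrA.
    by rewrite -mulr_suml -[in LHS]mulrA.
  apply: ler_sum => i _; rewrite cost_eq //; apply: ler_sum => j _.
  have hm := hmu j.
  have [bpos _] := fb i.
  set y := lam i * b i j.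
  have y0 : 0 <= y by rewrite /y mulr_ge0 // ltW.
  have yM : y <= M j.
    rewrite /M /Ld (bigD1 i) //= lerDl; apply: sumr_ge0 => k _.
    apply: mulr_ge0; [exact: ltW | by have [] := fb k].
  have -> : y * (y / (2 * mu j) + (Ld lam b j - y) / mu j)
          = y * M j / (2 * mu j) + y * (M j - y) / (2 * mu j) by rewrite /M; field; lra.
  rewrite lerDl; apply: divr_ge0; last lra.
  by rewrite mulr_ge0 // subr_ge0.
have H4 : \sum_(j < m) L j * L j / mu j <= \sum_(j < m) M j * M j / mu j.
  rewrite -subr_ge0 -sumrB.
  apply: (le_trans (mulr_ge0 (ler0n _ 2) H1)); rewrite mulr_sumr.
  apply: ler_sum => j _.
  have hm := hmu j.
  have -> : M j * M j / mu j - L j * L j / mu j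
      = 2%:R * ((M j - L j) * L j / mu j) + (M j - L j) ^+ 2 / mu j by field; lra.
  rewrite lerDl; apply: divr_ge0; [exact: sqr_ge0 | lra].
have H5 : \sum_(j < m) M j * M j / mu j = 2 * \sum_(j < m) M j * M j / (2 * mu j).
  rewrite mulr_sumr; apply: eq_bigr => j _; have hm := hmu j; field; lra.
have H6 : 0 <= \sum_(j < m) M j * M j / (2 * mu j).
  apply: sumr_ge0 => j _; have hm := hmu j; apply: divr_ge0; [by rewrite -expr2 sqr_ge0|lra].
lra.
Qed.
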